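(* Let $(X,d)$ be a separable metric space admitting a weak convergence, and let $p\ge 1$. If $\{\mu_n\}_{n\in\mathbb{N}}$ and $\mu$ in $\mathcal{P}_{p-1}(X)$ satisfy $\mu_n\to\mu$ in $\tau_{\mathrm{w}}^{p-1}$, then $$\max_{x_n\in M_p(\mu_n)}\min_{x\in M_p(\mu)} d(x_n,x)\to 0$$ as $n\to\infty$.
   Context: A convergence $c$ on a set $X$ is a rule assigning at most one point of $X$ as the ''limit'' of each sequence in $X$, such that whenever a sequence has limit $x$, every subsequence also has limit $x$. A convergence $w$ on $X$ is a weak convergence for $(X,d)$ if: (W1) whenever $\sup_n d(x_n,y)<\infty$ for some $y$, some subsequence converges in $w$ to some point of $X$; (W2) whenever $x_n\to x$ in $w$, $d(x,y)\le\liminf_n d(x_n,y)$ for all $y\in X$; (W3) whenever $x_n\to x$ in $w$ and $d(x_n,y)\to d(x,y)$ for some $y\in X$, then $d(x_n,x)\to0$. $(X,d)$ admits a weak convergence if such a $w$ exists. For $r\ge 0$, $\mathcal{P}_r(X)$ is the set of Borel probability measures $\mu$ on $(X,d)$ with $\int_X d^r(x,y)\,d\mu(y)<\infty$ for some (equivalently all) $x\in X$; $\mu_n\to\mu$ in $\tau_{\mathrm{w}}^{r}$ means $\int f\,d\mu_n\to\int f\,d\mu$ for every bounded continuous $f:(X,d)\to\mathbb{R}$ and $\int d^r(x,y)\,d\mu_n(y)\to\int d^r(x,y)\,d\mu(y)$ for all $x\in X$. For $\mu\in\mathcal{P}_{p-1}(X)$, $W_p(\mu,x,x'):=\int_X (d^p(x,y)-d^p(x',y))\,d\mu(y)$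 and $M_p(\mu):=\{x\in X: W_p(\mu,x,x')\le 0 \text{ for all } x'\in X\}$. *)

(* Defs.v *)
From HB Require Import structures.
From mathcomp Require Import all_boot all_order all_algebra.
From mathcomp Require Import all_classical all_reals all_analysis.
Set Implicit Arguments. Unset Strict Implicit. Unset Printing Implicit Defensive.
Import Order.TTheory GRing.Theory Num.Theory.
Import numFieldNormedType.Exports.
Local Open Scope classical_set_scope.
Local Open Scope ring_scope.

Section MetricDefs.
Context {R : realType} {X : Type} (d : X -> X -> R).

Definition is_metric : Prop :=
  [/\ (forall x y, 0 <= d x y),
      (forall x y, d x y = 0 <-> x = y),
      (forall x y, d x y = d y x) &
      (forall x y z, d x z <= d x y + d y z)].

Definition dball (x : X) (r : R) : set X := [set y | d x y < r].

Definition dopen (A : set X) : Prop :=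
  forall x, A x -> exists2 r : R, 0 < r & dball x r `<=` A.

Definition dseparable : Prop :=
  exists S : set X, countable S /\
    forall x (e : R), 0 < e -> exists2 s, S s & d x s < e.

Definition dcontinuous (f : X -> R) : Prop :=
  forall x (e : R), 0 < e -> exists2 del : R, 0 < del &
    forall y, d x y < del -> `|f y - f x| < e.

Definition bounded_fun (f : X -> R) : Prop := exists M : R, forall x, `|f x| <= M.

(* a convergence on X: relation "the sequence s has limit x";
   at most one limit per sequence, limits inherited by subsequences *)
Definition is_convergence (c : (nat -> X) -> X -> Prop) : Prop :=
  (forall s x y, c s x -> c s y -> x = y) /\
  (forall s x (phi : nat -> nat), (forall n, (phi n < phi n.+1)%N) ->
      c s x -> c (s \o phi) x).

Definition weak_convergence (c : (nat -> X) -> X -> Prop) : Prop :=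
  is_convergence c /\
  (forall s : nat -> X, (exists y (M : R), forall n, d (s n) y <= M) ->
     exists (phi : nat -> nat) (x : X),
       (forall n, (phi n < phi n.+1)%N) /\ c (s \o phi) x) /\
  (forall s x, c s x -> forall y,
     ((d x y)%:E <= limn_einf (fun n => (d (s n) y)%:E))%E) /\
  (forall s x, c s x -> forall y,
     (fun n => d (s n) y) @ \oo --> d x y ->
     (fun n => d (s n) x) @ \oo --> (0 : R)).

Definition admits_weak_convergence : Prop :=
  exists c, weak_convergence c.

End MetricDefs.

Section MeasureDefs.
Context {R : realType} {dsp : measure_display} {X : measurableType dsp}
  (d : X -> X -> R).

Definition borel_of_metric : Prop :=
  (@measurable dsp X) = <<s dopen d>>.

Definition in_P (r : R) (mu : probability X R) : Prop :=
  exists x : X, (\int[mu]_y ((d x y) `^ r)%:E < +oo)%E.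

Definition tau_w_cvg (r : R) (mu_ : nat -> probability X R)
  (mu : probability X R) : Prop :=
  (forall f : X -> R, dcontinuous d f -> bounded_fun f ->
     (fun n => (\int[mu_ n]_y (f y)%:E)%E) @ \oo --> (\int[mu]_y (f y)%:E)%E) /\
  (forall x : X,
     (fun n => (\int[mu_ n]_y ((d x y) `^ r)%:E)%E) @ \oo
       --> (\int[mu]_y ((d x y) `^ r)%:E)%E).

Definition W_p (p : R) (mu : probability X R) (x x' : X) : \bar R :=
  (\int[mu]_y ((d x y) `^ p - (d x' y) `^ p)%:E)%E.

Definition M_p (p : R) (mu : probability X R) : set X :=
  [set x | forall x' : X, (W_p p mu x x' <= 0)%E].

End MeasureDefs.

(* Main.v *)
Require Import Defs.
From HB Require Import structures.
From mathcomp Require Import all_boot all_order all_algebra.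
From mathcomp Require Import all_classical all_reals all_analysis.
Set Implicit Arguments. Unset Strict Implicit. Unset Printing Implicit Defensive.
Import Order.TTheory GRing.Theory Num.Theory.
Import numFieldNormedType.Exports.
Local Open Scope classical_set_scope.
Local Open Scope ring_scope.
From mathcomp Require Import lra ring.
Notation measurable_EFinP := measurable_realfun.measurable_EFinP.


Section RealIneq.
Context {R : realType}.
Implicit Types (a b p r : R).

Lemma pow_diff p a b : 1 <= p -> 0 <= a -> a <= b ->
  b `^ p - a `^ p <= p * b `^ (p - 1) * (b - a).
Proof.
move=> p1 a0 ab; have b0 : 0 <= b by apply: le_trans ab.
have [->|pn1] := eqVneq p 1.
  by rewrite !powRr1 // subrr powRr0 !mul1r.
have p1' : 1 < p by rewrite lt_neqAle eq_sym pn1.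
have p0 : 0 < p by apply: lt_trans p1'.
have q0 : 0 < p - 1 by rewrite subr_gt0.
have pq0 : 0 < p / (p - 1) by rewrite divr_gt0.
have := @conjugate_powR _ a (b `^ (p - 1)) p (p / (p - 1)) a0 (powR_ge0 _ _) p0 pq0.
rewrite -powRrM [(p - 1) * _]mulrC divfK ?gt_eqF // invf_div.
have e1 : p^-1 + (p - 1) / p = 1.
  by field; rewrite gt_eqF.
move=> /(_ e1) H.
have E : b `^ p = b * b `^ (p - 1) by rewrite mulr_powRB1.
rewrite E.
have H2 : p * (a * b `^ (p - 1)) <= a `^ p + (p - 1) * b `^ p.
  have : p * (a * b `^ (p - 1)) <= p * (a `^ p / p + b `^ p * ((p - 1) / p)).
    by rewrite ler_pM2l.
  have -> : p * (a `^ p / p + b `^ p * ((p - 1) / p)) = a `^ p + (p - 1) * b `^ p.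
    by field; rewrite gt_eqF.
  by [].
rewrite E in H2; nra.
Qed.

Lemma pow_superadd p a b : 1 <= p -> 0 <= a -> 0 <= b ->
  a `^ p + b `^ p <= (a + b) `^ p.
Proof.
move=> p1 a0 b0; have p0 : 0 < p by apply: lt_le_trans p1.
have ab0 : 0 <= a + b by rewrite addr_ge0.
rewrite -(mulr_powRB1 a0 p0) -(mulr_powRB1 b0 p0) -(mulr_powRB1 ab0 p0) mulrDl.
have q0 : 0 <= p - 1 by rewrite subr_ge0.
rewrite lerD // ler_wpM2l // ge0_ler_powR // ?nnegrE // ?addr_ge0 //.
- by rewrite lerDl.
- by rewrite lerDr.
Qed.

Lemma pow_ge_sub1 p s : 1 <= p -> 0 <= s -> s - 1 <= s `^ p.
Proof.
move=> p1 s0; have [s1|s1] := leP 1 s.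
  by rewrite (le_trans _ (le1r_powR s1 p1)) // gerBl.
by rewrite (le_trans _ (powR_ge0 _ _)) // subr_le0 ltW.
Qed.

Lemma pow_add_le r a b : 0 <= r -> 0 <= a -> 0 <= b ->
  (a + b) `^ r <= 2 `^ r * (a `^ r + b `^ r).
Proof.
move=> r0 a0 b0.
have M : a + b <= 2 * Num.max a b.
  by rewrite mulr2n mulrDl mul1r lerD // ?le_max ?lexx ?orbT.
apply: (@le_trans _ _ ((2 * Num.max a b) `^ r)).
  by rewrite ge0_ler_powR // ?nnegrE ?addr_ge0 ?mulr_ge0 // le_max a0.
rewrite powRM // ?le_max ?a0 // ler_wpM2l ?powR_ge0 //.
rewrite /Num.max; case: ifP => _.
  by rewrite lerDr powR_ge0.
by rewrite lerDl powR_ge0.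
Qed.

Lemma pow_mono r a b : 0 <= r -> 0 <= a -> a <= b -> a `^ r <= b `^ r.
Proof.
by move=> r0 a0 ab; rewrite ge0_ler_powR // nnegrE (le_trans a0).
Qed.

End RealIneq.

Section PowCont.
Context {R : realType}.

Lemma near_delta (P : R -> Prop) (a : R) : (\forall b \near a, P b) ->
  exists2 del : R, 0 < del & forall b, `|a - b| < del -> P b.
Proof.
move=> /nbhs_ballP [del del0 H]; by exists del => // b ab; apply: H.
Qed.

Lemma powR_cont (r a e : R) : 0 <= r -> 0 <= a -> 0 < e ->
  exists2 del : R, 0 < del &
    forall b, 0 <= b -> `|a - b| < del -> `|a `^ r - b `^ r| < e.
Proof.
move=> r0 a0 e0.
have [->|rn0] := eqVneq r 0.
  by exists 1 => // b _ _; rewrite !powRr0 subrr normr0.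
have rp : 0 < r by rewrite lt_neqAle eq_sym rn0.
have [->|an0] := eqVneq a 0.
  have := @powR_cvg0 R r rp.
  move/cvgrPdist_lt => /(_ e e0) H.
  have [del del0 Hd] := near_delta H.
  exists del => // b b0 ab.
  have [->|bn0] := eqVneq b 0; first by rewrite subrr normr0.
  have bp : 0 < b by rewrite lt_neqAle eq_sym bn0.
  rewrite powR0 ?rn0 //; apply: Hd => //.
have ap : 0 < a by rewrite lt_neqAle eq_sym an0.
have := @derivable_powR R 1 r a; rewrite in_itv/= andbT => /(_ ap).
move=> /derivable1_diffP /differentiable_continuous.
move/cvgrPdist_lt => /(_ e e0) H.
have [del del0 Hd] := near_delta H.
by exists del => // b _ ab; apply: Hd.
Qed.

End PowCont.


Lemma min_close (R : realType) (a a' b b' e : R) : `|a - a'| < e -> `|b - b'| < e ->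
  `|Num.min a b - Num.min a' b'| < e.
Proof.
rewrite !ltr_norml => /andP[h1 h2] /andP[h3 h4].
by case: (leP a b) => h5; case: (leP a' b') => h6; apply/andP; split; lra.
Qed.

Section Metric.
Context {R : realType} {X : Type} (d : X -> X -> R) (Hm : is_metric d).

Lemma d_ge0 x y : 0 <= d x y. Proof. by case: Hm. Qed.
Lemma d_sym x y : d x y = d y x. Proof. by case: Hm. Qed.
Lemma d_tri x y z : d x z <= d x y + d y z. Proof. by case: Hm. Qed.
Lemma d_xx x : d x x = 0. Proof. by case: Hm => _ h _ _; apply/h. Qed.

Lemma d_lip x y z : `|d x y - d x z| <= d y z.
Proof.
rewrite ler_norml; apply/andP; split.
- have := d_tri x y z; lra.
- have := d_tri x z y; rewrite (d_sym z y); lra.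
Qed.

Lemma dcont_lip (f : X -> R) (L : R) : 0 <= L ->
  (forall y z, `|f y - f z| <= L * d y z) -> dcontinuous d f.
Proof.
move=> L0 H x e e0; exists (e / (L + 1)); first by rewrite divr_gt0 // ltr_wpDl.
move=> y dxy; apply: (le_lt_trans (H y x)); rewrite d_sym.
have L1 : 0 < L + 1 by rewrite ltr_wpDl.
apply: (@le_lt_trans _ _ (L * (e / (L + 1)))).
  by rewrite ler_wpM2l // ltW.
rewrite mulrA ltr_pdivrMr //; nra.
Qed.

Lemma dcont_d x : dcontinuous d (d x).
Proof. by apply: (dcont_lip (L := 1)) => // y z; rewrite mul1r d_lip. Qed.

Lemma dcont_cst c : dcontinuous d (fun _ => c).
Proof. by move=> x e e0; exists 1 => // y _; rewrite subrr normr0. Qed.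

Lemma dcontD f g : dcontinuous d f -> dcontinuous d g ->
  dcontinuous d (fun y => f y + g y).
Proof.
move=> hf hg x e e0.
have e2 : 0 < e / 2 by rewrite divr_gt0.
have [d1 d10 H1] := hf x _ e2; have [d2 d20 H2] := hg x _ e2.
exists (Num.min d1 d2); first by rewrite lt_min d10 d20.
move=> y; rewrite lt_min => /andP[y1 y2].
have := H1 _ y1; have := H2 _ y2.
rewrite !ltr_norml => /andP[a1 a2] /andP[a3 a4]; apply/andP; split; lra.
Qed.

Lemma dcontZ c f : dcontinuous d f -> dcontinuous d (fun y => c * f y).
Proof.
move=> hf x e e0.
have c1 : 0 < `|c| + 1 by rewrite ltr_wpDl.
have [d1 d10 H1] := hf x (e / (`|c| + 1)) (divr_gt0 e0 c1).
exists d1 => // y /H1 h; rewrite -mulrBr normrM.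
apply: (@le_lt_trans _ _ (`|c| * (e / (`|c| + 1)))).
  by rewrite ler_wpM2l // ltW.
rewrite mulrA ltr_pdivrMr //; nra.
Qed.

Lemma dcontB f g : dcontinuous d f -> dcontinuous d g ->
  dcontinuous d (fun y => f y - g y).
Proof.
move=> hf hg; have := dcontD hf (dcontZ (-1) hg).
by congr dcontinuous; apply: funext => y; rewrite mulN1r.
Qed.

Lemma dcont_min f g : dcontinuous d f -> dcontinuous d g ->
  dcontinuous d (fun y => Num.min (f y) (g y)).
Proof.
move=> hf hg x e e0.
have [d1 d10 H1] := hf x _ e0; have [d2 d20 H2] := hg x _ e0.
exists (Num.min d1 d2); first by rewrite lt_min d10 d20.
move=> y; rewrite lt_min => /andP[y1 y2].
exact: min_close (H1 _ y1) (H2 _ y2).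
Qed.

Lemma dcont_max f g : dcontinuous d f -> dcontinuous d g ->
  dcontinuous d (fun y => Num.max (f y) (g y)).
Proof.
move=> hf hg.
have := dcontZ (-1) (dcont_min (dcontZ (-1) hf) (dcontZ (-1) hg)).
congr dcontinuous; apply: funext => y.
by rewrite !mulN1r -oppr_max opprK.
Qed.

Lemma dcont_pow f r : 0 <= r -> (forall y, 0 <= f y) -> dcontinuous d f ->
  dcontinuous d (fun y => f y `^ r).
Proof.
move=> r0 f0 hf x e e0.
have [del del0 Hd] := powR_cont r0 (f0 x) e0.
have [d1 d10 H1] := hf x _ del0.
exists d1 => // y /H1 h; rewrite distrC; apply: Hd => //.
by rewrite distrC.
Qed.

End Metric.

Section Meas.
Context {R : realType} {dsp : measure_display} {X : measurableType dsp}
  (d : X -> X -> R) (Hb : borel_of_metric d).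

Lemma dcont_meas f : dcontinuous d f -> measurable_fun setT f.
Proof.
move=> hf; apply: (measurability _ (measurable_realfun.RGenOInfty.measurableE R)) => //.
move=> _ [_ [a ->] <-]; rewrite setTI Hb; apply: sub_sigma_algebra.
move=> y /=; rewrite in_itv /= andbT => ay.
have e0 : 0 < f y - a by rewrite subr_gt0.
have [del del0 H] := hf y _ e0.
exists del => // z /= /H; rewrite in_itv /= andbT ltr_norml => /andP[h1 _].
lra.
Qed.

End Meas.



Section Integ.
Context {R : realType} {dsp : measure_display} {X : measurableType dsp}.
Variable P : probability X R.
Implicit Types (f g : X -> R).

Definition Int (f : X -> R) := P.-integrable setT (EFin \o f).
Definition RI (f : X -> R) : R := (\int[P]_y f y)%R.

Lemma Int_cst c : Int (fun _ => c).
Proof. exact: finite_measure_integrable_cst. Qed.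

Lemma Int_le f g : measurable_fun setT f -> (forall y, `|f y| <= g y) -> Int g -> Int f.
Proof.
move=> mf fg ig; apply: le_integrable ig => //.
  exact/measurable_EFinP.
move=> y _ /=; rewrite lee_fin (le_trans (fg y)) //.
exact: ler_norm.
Qed.

Lemma IntD f g : Int f -> Int g -> Int (fun y => f y + g y).
Proof.
move=> hf hg; have := integrableD measurableT hf hg.
by congr (integrable _ _); apply: funext => y.
Qed.

Lemma IntZ c f : Int f -> Int (fun y => c * f y).
Proof.
move=> hf; have := integrableZl measurableT c hf.
by congr (integrable _ _); apply: funext => y.
Qed.

Lemma IntB f g : Int f -> Int g -> Int (fun y => f y - g y).
Proof.
move=> hf hg; have := integrableB measurableT hf hg.
by congr (integrable _ _); apply: funext => y.
Qed.

Lemma Int_meas f : Int f -> measurable_fun setT f.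
Proof. by case/integrableP => /measurable_EFinP. Qed.

Lemma Int_norm f : Int f -> Int (fun y => `|f y|).
Proof.
move=> hf; apply/integrableP; split.
  apply/measurable_EFinP; apply: measurableT_comp => //; exact: Int_meas.
case/integrableP: hf => _ H.
apply: le_lt_trans H; rewrite le_eqVlt; apply/orP; left; apply/eqP.
by apply: eq_integral => y _ /=; rewrite normr_id.
Qed.

Lemma int_EFin f : Int f -> (\int[P]_y (f y)%:E)%E = (RI f)%:E.
Proof. by move=> hf; rewrite /RI /Rintegral fineK //; exact: integrable_fin_num. Qed.

Lemma RI_le f g : Int f -> Int g -> (forall y, f y <= g y) -> RI f <= RI g.
Proof. by move=> hf hg fg; apply: le_Rintegral. Qed.

Lemma RID f g : Int f -> Int g -> RI (fun y => f y + g y) = RI f + RI g.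
Proof. by move=> hf hg; apply: RintegralD. Qed.

Lemma RIB f g : Int f -> Int g -> RI (fun y => f y - g y) = RI f - RI g.
Proof. by move=> hf hg; apply: RintegralB. Qed.

Lemma RIZ c f : Int f -> RI (fun y => c * f y) = c * RI f.
Proof. by move=> hf; apply: RintegralZl. Qed.

Lemma RI_cst c : RI (fun _ => c) = c.
Proof.
rewrite /RI Rintegral_cst //.

have h := probability_setT P.
have h' : fine (P [set: X]) = 1 by exact: (congr1 fine h).
by rewrite h' mulr1.
Qed.

Lemma RI_ge0 f : (forall y, 0 <= f y) -> 0 <= RI f.
Proof. by move=> f0; apply: Rintegral_ge0. Qed.

Lemma RI_norm f : Int f -> `|RI f| <= RI (fun y => `|f y|).
Proof. by move=> hf; apply: le_normr_Rintegral. Qed.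

Lemma Int_ge0_lty f : measurable_fun setT f -> (forall y, 0 <= f y) ->
  (\int[P]_y (f y)%:E < +oo)%E -> Int f.
Proof.
move=> mf f0 hf; apply/integrableP; split; first exact/measurable_EFinP.
by under eq_integral do rewrite /= ger0_norm //.
Qed.

Lemma Int_lty f : Int f -> (\int[P]_y (f y)%:E < +oo)%E.
Proof. by move=> hf; rewrite int_EFin // ltry. Qed.

End Integ.

Section InP.
Context {R : realType} {dsp : measure_display} {X : measurableType dsp}
  (d : X -> X -> R) (Hm : is_metric d) (Hb : borel_of_metric d).

Lemma dpow_meas r x : 0 <= r -> measurable_fun setT (fun y => d x y `^ r).
Proof.
move=> r0; apply: (dcont_meas Hb); apply: dcont_pow => //.
  exact: d_ge0.
exact: dcont_d.
Qed.

Lemma inP_all (P : probability X R) r : 0 <= r -> in_P d r P ->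
  forall x, Int P (fun y => d x y `^ r).
Proof.
move=> r0 [x' hx'] x.
have i' : Int P (fun y => d x' y `^ r).
  apply: Int_ge0_lty => //; first exact: dpow_meas.
  by move=> y; apply: powR_ge0.
apply: (@Int_le _ _ _ _ _ (fun y => 2 `^ r * (d x x' `^ r + d x' y `^ r))).
- exact: dpow_meas.
- move=> y; rewrite ger0_norm ?powR_ge0 //.
  apply: le_trans (pow_add_le r0 (d_ge0 Hm _ _) (d_ge0 Hm _ _)).
  apply: pow_mono => //; first exact: d_ge0.
  exact: d_tri.
- by apply: IntZ; apply: IntD => //; exact: Int_cst.
Qed.

End InP.


Section DCT.
Context {R : realType} {dsp : measure_display} {X : measurableType dsp}.
Variable P : probability X R.

Lemma dct (f_ : nat -> X -> R) (f g : X -> R) :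
  (forall n, measurable_fun setT (f_ n)) -> measurable_fun setT f ->
  Int P g -> (forall n y, `|f_ n y| <= g y) ->
  (forall y, f_ ^~ y @ \oo --> f y) ->
  RI P (f_ n) @[n --> \oo] --> RI P f.
Proof.
move=> mf_ mf ig fg cf.
have := @dominated_convergence _ _ _ P setT measurableT (fun n => EFin \o f_ n)
  (EFin \o f) (EFin \o g).
case.
- by move=> n; apply/measurable_EFinP.
- exact/measurable_EFinP.
- apply: aeW => y _ /=; apply: cvg_comp (cf y) _; exact: cvg_id.
- exact: ig.
- by apply: aeW => y n _ /=; rewrite lee_fin.
move=> iF _ H.
have E : (\int[P]_y (EFin \o f) y)%E = (RI P f)%:E by exact: int_EFin.
rewrite E in H; exact: (fine_cvg H).
Qed.

End DCT.


Lemma clamp_bound (R : realType) (a t C C' K : R) : 0 <= C -> 0 <= C' -> 0 <= K ->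
  `|a| <= C + C' * t ->
  `|a - Num.max (- (C + C' * K)) (Num.min a (C + C' * K))| <= C' * (t - Num.min t K).
Proof.
move=> C0 C'0 K0; rewrite ler_norml => /andP[h1 h2].
case: (leP a (C + C' * K)) => h3; case: (leP t K) => h4.
- case: (leP (- (C + C' * K)) a) => h5; rewrite ler_norml; apply/andP; split; nra.
- case: (leP (- (C + C' * K)) a) => h5; rewrite ler_norml; apply/andP; split; nra.
- case: (leP (- (C + C' * K)) (C + C' * K)) => h5; rewrite ler_norml; apply/andP; split; nra.
- case: (leP (- (C + C' * K)) (C + C' * K)) => h5; rewrite ler_norml; apply/andP; split; nra.
Qed.

Lemma eventually_ex (P : nat -> Prop) : (\forall n \near \oo, P n) -> exists n, P n.
Proof. by move=> [N _ HN]; exists N; apply: HN => /=. Qed.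

Section LemA.
Context {R : realType} {dsp : measure_display} {X : measurableType dsp}
  (d : X -> X -> R) (Hm : is_metric d) (Hb : borel_of_metric d).
Variables (q : R) (nu : nat -> probability X R) (mu : probability X R).
Hypothesis q0 : 0 <= q.
Hypothesis hcvg : tau_w_cvg d q nu mu.
Hypothesis hmu : in_P d q mu.

Lemma bc_cvg f : dcontinuous d f -> (exists M, forall y, `|f y| <= M) ->
  [/\ forall n, Int (nu n) f, Int mu f & RI (nu n) f @[n --> \oo] --> RI mu f].
Proof.
move=> hf [M hM].
have mf := dcont_meas Hb hf.
have IP (P : probability X R) : Int P f.
  by apply: (Int_le (g := fun _ => M)) => //; exact: Int_cst.
split => //.
have := hcvg.1 f hf (ex_intro _ M hM).
rewrite (int_EFin (IP mu)) => /fine_cvg; exact.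
Qed.

Lemma h_cvg x : [/\ \forall n \near \oo, Int (nu n) (fun y => d x y `^ q),
  Int mu (fun y => d x y `^ q) &
  RI (nu n) (fun y => d x y `^ q) @[n --> \oo] --> RI mu (fun y => d x y `^ q)].
Proof.
have Imu := inP_all Hm Hb q0 hmu x.
have := hcvg.2 x; rewrite (int_EFin Imu) => /fine_cvgP [H1 H2].
split => //.
apply: filterS H1 => n hn; apply: Int_ge0_lty.
- exact: dpow_meas.
- by move=> y; apply: powR_ge0.
- by rewrite ltey_eq hn.
Qed.

Lemma lemA x0 g C C' : 0 <= C -> 0 <= C' -> dcontinuous d g ->
  (forall y, `|g y| <= C + C' * d x0 y `^ q) ->
  [/\ \forall n \near \oo, Int (nu n) g, Int mu g &
      RI (nu n) g @[n --> \oo] --> RI mu g].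
Proof.
move=> C0 C'0 hg gb.
pose h y := d x0 y `^ q.
have h0 y : 0 <= h y by apply: powR_ge0.
have [Inh Imh cvh] := h_cvg x0.
have mg := dcont_meas Hb hg.
have mh : measurable_fun setT h by exact: dpow_meas.
have hc : dcontinuous d h.
  by apply: dcont_pow => //; [exact: d_ge0 | exact: dcont_d].
have IgB (P : probability X R) : Int P h -> Int P g.
  move=> ih; apply: (Int_le (g := fun y => C + C' * h y)) => //.
  by apply: IntD; [exact: Int_cst | exact: IntZ].
split; [by apply: filterS Inh => n; exact: IgB | exact: IgB |].
apply/cvgrPdist_lt => e e0.
pose e' := e / (4 * (C' + 1)).
have e'0 : 0 < e' by rewrite divr_gt0 // mulr_gt0 // ltr_wpDl.
pose hK (K : R) y := Num.min (h y) K.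
have hKc K : dcontinuous d (hK K) by apply: dcont_min => //; exact: dcont_cst.
have hKb K : 0 <= K -> exists M, forall y, `|hK K y| <= M.
  move=> K0; exists K => y; rewrite ger0_norm ?ge_min ?lexx ?orbT //.
  by rewrite le_min h0 K0.
have [K [K0 HK]] : exists K, 0 <= K /\ RI mu h - RI mu (hK K) < e'.
  have : RI mu (hK k%:R) @[k --> \oo] --> RI mu h.
    apply: (@dct _ _ _ mu (fun k : nat => hK k%:R) h h).
  - by move=> k; apply: (dcont_meas Hb); exact: hKc.
  - exact: mh.
  - exact: Imh.
  - move=> k y; rewrite ger0_norm; last by rewrite le_min h0 ler0n.
    by rewrite ge_min lexx.
  - move=> y; apply: cvg_near_cst; have := nbhs_infty_ger (h y).
    by apply: filterS => k hk; rewrite /hK (min_l hk).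
  move/cvgrPdist_lt => /(_ e' e'0) /eventually_ex [k hk].
  exists k%:R; split => //; rewrite (le_lt_trans _ hk) // ler_norm //.
pose M := C + C' * K.
have M0 : 0 <= M by rewrite addr_ge0 // mulr_ge0.
pose gK y := Num.max (- M) (Num.min (g y) M).
have gKc : dcontinuous d gK.
  by apply: dcont_max; [exact: dcont_cst | apply: dcont_min => //; exact: dcont_cst].
have gKb : exists M', forall y, `|gK y| <= M'.
  exists M => y; rewrite /gK ler_norml; apply/andP; split.
    by rewrite le_max lexx.
  by rewrite ge_max ge_min lexx orbT andbT; lra.
have [InK ImK cvK] := bc_cvg (hKc K) (hKb K K0).
have [IngK ImgK cvgK] := bc_cvg gKc gKb.
have bnd (P : probability X R) : Int P h -> Int P gK -> Int P (hK K) ->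
    `|RI P g - RI P gK| <= C' * (RI P h - RI P (hK K)).
  move=> ih igK ihK; have ig := IgB P ih.
  rewrite -RIB // -RIB // -RIZ; last exact: IntB.
  apply: (le_trans (RI_norm (IntB ig igK))).
  apply: RI_le; [exact/Int_norm/IntB | by apply: IntZ; exact: IntB |].
  by move=> y; apply: clamp_bound.
move: cvh => /cvgrPdist_lt /(_ e' e'0) E1.
move: cvK => /cvgrPdist_lt /(_ e' e'0) E2.
move: cvgK => /cvgrPdist_lt /(_ e' e'0) E3.
near=> n.
have i1 : Int (nu n) h by near: n.
have e1 : `|RI mu h - RI (nu n) h| < e' by near: n.
have e2 : `|RI mu (hK K) - RI (nu n) (hK K)| < e' by near: n.
have e3 : `|RI mu gK - RI (nu n) gK| < e' by near: n.
have b1 := bnd mu Imh ImgK ImK.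
have b2 := bnd (nu n) i1 (IngK n) (InK n).
have t2 : C' * (RI mu h - RI mu (hK K)) <= C' * e'.
  by rewrite ler_wpM2l // ltW.
have t1 : C' * (RI (nu n) h - RI (nu n) (hK K)) <= C' * (3 * e').
  rewrite ler_wpM2l //.
  move: e1 e2 HK; rewrite !ltr_norml => /andP[a1 a2] /andP[a3 a4] a5; lra.
have ee : e = 4 * (C' + 1) * e'.
  by rewrite /e' mulrC divfK // gt_eqF // mulr_gt0 // ltr_wpDl.
have : `|RI mu g - RI (nu n) g| <= `|RI mu g - RI mu gK| + `|RI mu gK - RI (nu n) gK|
    + `|RI (nu n) gK - RI (nu n) g|.
  have -> : RI mu g - RI (nu n) g = (RI mu g - RI mu gK) + (RI mu gK - RI (nu n) gK)
    + (RI (nu n) gK - RI (nu n) g) by ring.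
  apply: le_trans (ler_normD _ _) _; rewrite lerD2r; exact: ler_normD.
rewrite distrC in b2.
nra.
Unshelve. all: end_near.
Qed.

End LemA.


Section Growth.
Context {R : realType} {X : Type} (d : X -> X -> R) (Hm : is_metric d).
Variable p : R.
Hypothesis p1 : 1 <= p.

Lemma pow_absdiff (a b L : R) : 0 <= a -> 0 <= b -> `|a - b| <= L ->
  `|a `^ p - b `^ p| <= p * L * (2 `^ (p - 1) * (L `^ (p - 1) + b `^ (p - 1))).
Proof.
move=> a0 b0 abL.
have q0 : 0 <= p - 1 by rewrite subr_ge0.
have p0 : 0 <= p by apply: le_trans p1.
have L0 : 0 <= L by apply: le_trans abL.
have key : forall u v, 0 <= u -> u <= v -> v <= b + L ->  v - u <= L ->
    v `^ p - u `^ p <= p * L * (2 `^ (p - 1) * (L `^ (p - 1) + b `^ (p - 1))).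
  move=> u v u0 uv vb vuL.
  apply: le_trans (pow_diff p1 u0 uv) _.
  have v0 : 0 <= v by apply: le_trans uv.
  have h1 : v `^ (p - 1) <= 2 `^ (p - 1) * (L `^ (p - 1) + b `^ (p - 1)).
    apply: le_trans (pow_add_le q0 L0 b0).
    by apply: pow_mono => //; rewrite addrC.
  have h2 : 0 <= v `^ (p - 1) by apply: powR_ge0.
  set W := 2 `^ (p - 1) * (L `^ (p - 1) + b `^ (p - 1)) in h1 *.
  rewrite -mulrA (_ : p * L * W = p * (W * L)); last by ring.
  by apply: ler_wpM2l => //; apply: ler_pM => //; rewrite subr_ge0.
move: abL; rewrite ler_norml => /andP[h1 h2].
have [ab|ba] := leP a b.
  rewrite ler0_norm; last by rewrite subr_le0 pow_mono.
  rewrite opprB; apply: key => //; lra.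
rewrite ger0_norm; last by rewrite subr_ge0 pow_mono // ltW.
apply: key => //; try lra; exact: ltW.
Qed.

Lemma dpow_growth z x' y :
  `|d z y `^ p - d x' y `^ p| <=
    p * d z x' * 2 `^ (p - 1) * d z x' `^ (p - 1)
    + p * d z x' * 2 `^ (p - 1) * d x' y `^ (p - 1).
Proof.
have H : `|d z y - d x' y| <= d z x'.
  rewrite (d_sym Hm z y) (d_sym Hm x' y); exact: d_lip.
have := pow_absdiff (d_ge0 Hm z y) (d_ge0 Hm x' y) H.
move=> H2; apply: le_trans H2 _; rewrite le_eqVlt; apply/orP; left; apply/eqP; ring.
Qed.

End Growth.

Section WInt.
Context {R : realType} {dsp : measure_display} {X : measurableType dsp}
  (d : X -> X -> R) (Hm : is_metric d) (Hb : borel_of_metric d).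
Variable p : R.
Hypothesis p1 : 1 <= p.

Lemma dcont_dpow r x : 0 <= r -> dcontinuous d (fun y => d x y `^ r).
Proof. by move=> r0; apply: dcont_pow => //; [exact: d_ge0 | exact: dcont_d]. Qed.

Lemma W_int (P : probability X R) : in_P d (p - 1) P ->
  forall z x', Int P (fun y => d z y `^ p - d x' y `^ p).
Proof.
move=> hP z x'.
have q0 : 0 <= p - 1 by rewrite subr_ge0.
have p0 : 0 <= p by apply: le_trans p1.
apply: (Int_le (g := fun y => p * d z x' * 2 `^ (p - 1) * d z x' `^ (p - 1)
    + p * d z x' * 2 `^ (p - 1) * d x' y `^ (p - 1))).
- by apply: (dcont_meas Hb); apply: dcontB; apply: dcont_dpow.
- by move=> y; apply: dpow_growth.
- apply: IntD; first exact: Int_cst.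
  by apply: IntZ; apply: inP_all.
Qed.

Lemma Mp_RI (P : probability X R) z : in_P d (p - 1) P -> M_p d p P z ->
  forall x', RI P (fun y => d z y `^ p - d x' y `^ p) <= 0.
Proof.
move=> hP hz x'; have := hz x'; rewrite /W_p.
by rewrite (int_EFin (W_int hP z x')) lee_fin.
Qed.

End WInt.

Section DcontM.
Context {R : realType} {X : Type} (d : X -> X -> R).

Lemma dcontM f g : dcontinuous d f -> dcontinuous d g ->
  dcontinuous d (fun y => f y * g y).
Proof.
move=> hf hg x e e0.
pose A := `|f x| + 1; pose B := `|g x| + 1.
have A0 : 0 < A by rewrite ltr_wpDl.
have B0 : 0 < B by rewrite ltr_wpDl.
have e1 : 0 < Num.min 1 (e / (4 * B)) by rewrite lt_min ltr01 divr_gt0 // mulr_gt0.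
have e2 : 0 < e / (4 * A) by rewrite divr_gt0 // mulr_gt0.
have [d1 d10 H1] := hf x _ e1; have [d2 d20 H2] := hg x _ e2.
exists (Num.min d1 d2); first by rewrite lt_min d10 d20.
move=> y; rewrite lt_min => /andP[y1 y2].
have := H1 _ y1; have := H2 _ y2; rewrite lt_min => h2 /andP[h1 h1'].
have fy : `|f y| <= A.
  have := ler_normD (f y - f x) (f x); rewrite subrK => h.
  apply: le_trans h _; rewrite /A; lra.
have -> : f y * g y - f x * g x = f y * (g y - g x) + g x * (f y - f x) by ring.
apply: le_lt_trans (ler_normD _ _) _; rewrite !normrM.
have t1 : `|f y| * `|g y - g x| <= A * (e / (4 * A)).
  by apply: ler_pM => //; exact: ltW.
have t2 : `|g x| * `|f y - f x| <= B * (e / (4 * B)).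
  apply: ler_pM => //; first by rewrite /B lerDl.
  exact: ltW.
have t1' : A * (e / (4 * A)) = e / 4 by field; rewrite gt_eqF.
have t2' : B * (e / (4 * B)) = e / 4 by field; rewrite gt_eqF.
lra.
Qed.

End DcontM.


Definition kap {R : realType} (p D0 t : R) : R :=
  Num.max (1 - (4 * t + 1) / D0) 0
  - p * t `^ (p - 1) * Num.min 1 (Num.max 0 (8 * t / (D0 - 1) - 1)).

Lemma claim1 {R : realType} (p D0 D s t : R) : 1 <= p -> 1 < D0 -> D0 <= D ->
  0 <= s -> 0 <= t -> D <= t + s -> t <= s + D ->
  D * kap p D0 t <= s `^ p - t `^ p.
Proof.
move=> p1 D01 D0D s0 t0 tri1 tri2; rewrite /kap.
have p0 : 0 <= p by lra.
have q0 : 0 <= p - 1 by lra.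
have D00 : 0 < D0 by lra.
have D0' : 0 < D0 - 1 by lra.
have D0p : 0 < D by lra.
have tq0 : 0 <= t `^ (p - 1) by apply: powR_ge0.
have L1 : - (p * t `^ (p - 1) * D) <= s `^ p - t `^ p.
  have [st|ts] := leP t s.
    have : t `^ p <= s `^ p by apply: pow_mono.
    have : 0 <= p * t `^ (p - 1) * D by rewrite !mulr_ge0 // ltW.
    lra.
  have := pow_diff p1 s0 (ltW ts).
  have : p * t `^ (p - 1) * (t - s) <= p * t `^ (p - 1) * D.
    by rewrite ler_wpM2l ?mulr_ge0 //; lra.
  lra.
have th0 : 0 <= Num.min 1 (Num.max 0 (8 * t / (D0 - 1) - 1)).
  by rewrite le_min ler01 le_max lexx.
have th1 : Num.min 1 (Num.max 0 (8 * t / (D0 - 1) - 1)) <= 1.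
  by rewrite ge_min lexx.
case: (leP (1 - (4 * t + 1) / D0) 0) => ha.
  have h4 : D0 <= 4 * t + 1.
    by move: ha; rewrite subr_le0 ler_pdivlMr // mul1r.
  have h8 : 1 <= 8 * t / (D0 - 1) - 1.
    rewrite lerBrDr ler_pdivlMr //; lra.
  have -> : Num.min 1 (Num.max 0 (8 * t / (D0 - 1) - 1)) = 1.
    by rewrite (max_r (le_trans ler01 h8)) (min_l h8).
  rewrite sub0r mulr1 mulrN; lra.
have h4 : 4 * t + 1 < D0.
  by move: ha; rewrite subr_gt0 ltr_pdivrMr // mul1r.
have L2 : D - 2 * t - 1 <= s `^ p - t `^ p.
  have dt : 0 <= D - 2 * t by lra.
  have h1 := pow_superadd p1 dt t0.
  have h2 : (D - 2 * t + t) `^ p <= s `^ p.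
    by apply: pow_mono => //; lra.
  have h3 := pow_ge_sub1 p1 dt.
  lra.
have h5 : D * (1 - (4 * t + 1) / D0) <= D - (4 * t + 1).
  rewrite mulrBr mulr1 lerD2l lerN2.
  rewrite mulrA ler_pdivlMr // mulrC ler_pM2r //; lra.
have h6 : 0 <= D * (p * t `^ (p - 1) * Num.min 1 (Num.max 0 (8 * t / (D0 - 1) - 1))).
  by rewrite !mulr_ge0 //; lra.
rewrite mulrBr; lra.
Qed.

Lemma kap_bound {R : realType} (p D0 t : R) : 1 <= p -> 0 <= D0 -> 0 <= t ->
  `|kap p D0 t| <= 1 + p * t `^ (p - 1).
Proof.
move=> p1 D00 t0; rewrite /kap.
have tq0 : 0 <= t `^ (p - 1) by apply: powR_ge0.
have c0 : 0 <= (4 * t + 1) / D0 by rewrite divr_ge0 //; lra.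
have A0 : 0 <= Num.max (1 - (4 * t + 1) / D0) 0 by rewrite le_max lexx orbT.
have A1 : Num.max (1 - (4 * t + 1) / D0) 0 <= 1 by rewrite ge_max ler01 andbT; lra.
have th0 : 0 <= Num.min 1 (Num.max 0 (8 * t / (D0 - 1) - 1)).
  by rewrite le_min ler01 le_max lexx.
have th1 : Num.min 1 (Num.max 0 (8 * t / (D0 - 1) - 1)) <= 1.
  by rewrite ge_min lexx.
have P0 : 0 <= p * t `^ (p - 1) by rewrite mulr_ge0 //; lra.
have h1 : p * t `^ (p - 1) * Num.min 1 (Num.max 0 (8 * t / (D0 - 1) - 1)) <= p * t `^ (p - 1).
  by rewrite -[X in _ <= X]mulr1 ler_wpM2l.
have h2 : 0 <= p * t `^ (p - 1) * Num.min 1 (Num.max 0 (8 * t / (D0 - 1) - 1)).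
  by rewrite mulr_ge0.
rewrite ler_norml; apply/andP; split; lra.
Qed.

Lemma kap_large {R : realType} (p D0 t e : R) : 1 <= p -> 0 <= t -> 0 < e ->
  8 * t + 2 + (4 * t + 1) / e <= D0 -> `|1 - kap p D0 t| < e.
Proof.
move=> p1 t0 e0 hD; rewrite /kap.
have c0 : 0 <= (4 * t + 1) / e by rewrite divr_ge0 //; lra.
have D0' : 0 < D0 - 1 by lra.
have D00 : 0 < D0 by lra.
have h8 : 8 * t / (D0 - 1) - 1 <= 0.
  rewrite subr_le0 ler_pdivrMr //; lra.
rewrite (max_l h8) (min_r ler01) mulr0 subr0.
have hc : (4 * t + 1) / D0 < e.
  rewrite ltr_pdivrMr //.
  have : 4 * t + 1 <= (4 * t + 1) / e * e by rewrite divfK ?gt_eqF.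
  have : (4 * t + 1) / e * e < D0 * e by rewrite ltr_pM2r //; lra.
  lra.
have hc1 : (4 * t + 1) / D0 <= 1.
  rewrite ler_pdivrMr //; lra.
have hc0 : 0 <= (4 * t + 1) / D0 by rewrite divr_ge0 //; lra.
rewrite max_l; last lra.
rewrite ger0_norm; lra.
Qed.

Section Bnd.
Context {R : realType} {dsp : measure_display} {X : measurableType dsp}
  (d : X -> X -> R) (Hm : is_metric d) (Hb : borel_of_metric d).
Variable p : R.
Hypothesis p1 : 1 <= p.
Variables (nu : nat -> probability X R) (mu : probability X R).
Hypothesis hcvg : tau_w_cvg d (p - 1) nu mu.
Hypothesis hmu : in_P d (p - 1) mu.
Hypothesis hnu : forall n, in_P d (p - 1) (nu n).

Let q0 : 0 <= p - 1. Proof. by rewrite subr_ge0. Qed.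
Let p0 : 0 <= p. Proof. by apply: le_trans p1. Qed.

Lemma dcont_kap o D0 : dcontinuous d (fun y => kap p D0 (d o y)).
Proof.
rewrite /kap; apply: dcontB.
  apply: dcont_max; last exact: dcont_cst.
  apply: dcontB; first exact: dcont_cst.
  apply: dcontM; last exact: dcont_cst.
  by apply: dcontD; [apply: dcontZ; exact: dcont_d | exact: dcont_cst].
apply: dcontM.
  by apply: dcontZ; apply: dcont_dpow.
apply: dcont_min; first exact: dcont_cst.
apply: dcont_max; first exact: dcont_cst.
apply: dcontB; last exact: dcont_cst.
by apply: dcontM; [apply: dcontZ; exact: dcont_d | exact: dcont_cst].
Qed.

Lemma exists_kap o : exists k : nat, (1 < k%:R :> R) /\ 1 / 2 < RI mu (fun y => kap p k%:R (d o y)).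
Proof.
have H : RI mu (fun y => kap p (k : nat)%:R (d o y)) @[k --> \oo] --> RI mu (fun _ => 1 : R).
  apply: (@dct _ _ _ mu _ _ (fun y => 1 + p * d o y `^ (p - 1))).
  - by move=> k; apply: (dcont_meas Hb); exact: dcont_kap.
  - exact: measurable_cst.
  - by apply: IntD; [exact: Int_cst | apply: IntZ; apply: inP_all].
  - by move=> k y; apply: kap_bound => //; exact: d_ge0.
  - move=> y; apply/cvgrPdist_lt => e e0.
    have := nbhs_infty_ger (8 * d o y + 2 + (4 * d o y + 1) / e).
    apply: filterS => k hk; apply: kap_large => //; exact: d_ge0.
rewrite RI_cst in H.
have e0 : 0 < 1 / 2 :> R by rewrite divr_gt0.
move/cvgrPdist_lt: H => /(_ _ e0) H.
have [k [hk1 hk2]] : exists k, (2 <= k)%N /\ `|1 - RI mu (fun y => kap p k%:R (d o y))| < 1 / 2.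
  apply: eventually_ex; apply: filterS2 (nbhs_infty_ge 2) H => k h1 h2; by split.
exists k; split.
  by apply: (@lt_le_trans _ _ 2%:R); [rewrite ltr1n | rewrite ler_nat].
move: hk2; rewrite ltr_norml => /andP[a1 a2]; lra.
Qed.

Lemma bounded_min o (z : nat -> X) : (forall n, M_p d p (nu n) (z n)) ->
  exists D0 : R, \forall n \near \oo, d o (z n) < D0.
Proof.
move=> hz.
have [k [hk1 hk2]] := exists_kap o.
set D0 := k%:R in hk1 hk2.
pose f y := kap p D0 (d o y).
have [Inf Imf cvf] := @lemA _ _ _ d Hm Hb (p - 1) nu mu q0 hcvg hmu o f 1 p ler01 p0
  (dcont_kap o D0) (fun y => kap_bound p1 (ltW (lt_trans ltr01 hk1)) (d_ge0 Hm o y)).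
have e0 : 0 < 1 / 2 :> R by rewrite divr_gt0.
move/cvgrPdist_lt: cvf => /(_ _ e0) E.
exists D0; near=> n.
have i1 : Int (nu n) f by near: n.
have e1 : `|RI mu f - RI (nu n) f| < 1 / 2 by near: n.
have pos : 0 < RI (nu n) f.
  move: e1; rewrite ltr_norml => /andP[a1 a2]; rewrite /f; lra.
rewrite ltNge; apply/negP => hD.
have W0 := Mp_RI Hm Hb p1 (hnu n) (hz n) o.
have iW := W_int Hm Hb p1 (hnu n) (z n) o.
have : RI (nu n) (fun y => d o (z n) * f y) <= RI (nu n) (fun y => d (z n) y `^ p - d o y `^ p).
  apply: RI_le => //; first exact: IntZ.
  move=> y; apply: claim1 => //; try exact: d_ge0.
  - by apply: le_trans (d_tri Hm o y (z n)) _; rewrite (d_sym Hm y (z n)) addrC.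
  - by apply: le_trans (d_tri Hm o (z n) y) _; rewrite addrC.
rewrite RIZ //.
have : 0 < d o (z n) * RI (nu n) f by rewrite mulr_gt0 // (lt_le_trans _ hD) // (lt_trans ltr01 hk1).
lra.
Unshelve. all: end_near.
Qed.

End Bnd.


Definition incr (phi : nat -> nat) := forall n, (phi n < phi n.+1)%N.

Lemma incr_ge phi : incr phi -> forall n, (n <= phi n)%N.
Proof.
move=> h; elim=> [//|n ih]; apply: leq_ltn_trans ih _; exact: h.
Qed.

Lemma incr_lt phi : incr phi -> forall m n, (m < n)%N -> (phi m < phi n)%N.
Proof.
move=> h m; elim=> [//|n ih]; rewrite ltnS leq_eqVlt => /orP[/eqP ->|/ih hm].
  exact: h.
exact: ltn_trans hm (h n).
Qed.

Lemma incr_comp phi psi : incr phi -> incr psi -> incr (phi \o psi).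
Proof. by move=> h1 h2 n /=; apply: incr_lt. Qed.

Lemma incr_shift N : incr (fun n => (n + N)%N).
Proof. by move=> n; rewrite addSn. Qed.

Lemma cvg_sub {T : Type} (F : set_system T) (u : nat -> T) phi :
  incr phi -> u @ \oo `=>` F -> (u \o phi) @ \oo `=>` F.
Proof.
move=> h hu; apply: (cvg_trans _ hu).
move=> P [N _ HN]; exists N => // n /= hn; apply: HN => /=.
exact: leq_trans hn (incr_ge h n).
Qed.

Lemma tau_sub {R : realType} {dsp : measure_display} {X : measurableType dsp}
  (d : X -> X -> R) r nu mu phi :
  incr phi -> tau_w_cvg d r nu mu -> tau_w_cvg d r (nu \o phi) mu.
Proof.
move=> h [h1 h2]; split.
  by move=> f hf hb; apply: (cvg_sub h (h1 f hf hb)).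
by move=> x; apply: (cvg_sub h (h2 x)).
Qed.

Lemma low_W2 {R : realType} (u : nat -> R) (l : R) :
  (l%:E <= limn_einf (fun n => (u n)%:E))%E ->
  forall e, 0 < e -> exists N, forall n, (N <= n)%N -> l - e < u n.
Proof.
move=> hl e e0.
rewrite limn_einf_lim (cvg_lim _ (@cvg_einfs_sup _ _)) in hl; last first.
  exact: ereal_hausdorff.
have : ((l - e)%:E < ereal_sup (range (einfs (fun n => (u n)%:E)))) %E.
  by apply: lt_le_trans hl; rewrite lte_fin; lra.
move=> /ereal_sup_gt [_ [N _ <-]] hN.
exists N => n hn; rewrite -lte_fin; apply: lt_le_trans hN _.
by apply: ereal_inf_lbound; exists n.
Qed.

Lemma extract {R : realType} (u : nat -> R) (l : R) :
  (forall N e, 0 < e -> exists n, (N <= n)%N /\ u n < l + e) ->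
  (forall e, 0 < e -> exists N, forall n, (N <= n)%N -> l - e < u n) ->
  exists psi, incr psi /\ (u \o psi) @ \oo --> l.
Proof.
move=> up low.
have pick (N k : nat) : {n | (N <= n)%N /\ u n < l + 1 / k.+1%:R}.
  by apply: cid; apply: up; rewrite divr_gt0 // ltr0n.
pose psi := fix f k := match k with
  | 0 => sval (pick 0%N 0%N)
  | k'.+1 => sval (pick (f k').+1 k'.+1) end.
have hinc : incr psi by move=> k /=; case: (svalP (pick (psi k).+1 k.+1)).
have hup k : u (psi k) < l + 1 / k.+1%:R.
  by case: k => [|k] /=; [case: (svalP (pick 0%N 0%N)) | case: (svalP (pick (psi k).+1 k.+1))].
exists psi; split => //.
apply/cvgrPdist_lt => e e0.
have [N HN] := low e e0.
near=> k.
have k1 : (N <= k)%N by near: k; exact: nbhs_infty_ge.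
have k2 : e^-1 <= k%:R by near: k; exact: nbhs_infty_ger.
have h1 := HN _ (leq_trans k1 (incr_ge hinc k)).
have h2 := hup k.
have h3 : (1 / k.+1%:R : R) < e.
  rewrite ltr_pdivrMr ?ltr0n // -ltr_pdivrMl // mulr1.
  by apply: le_lt_trans k2 _; rewrite ltr_nat.
change (`|l - u (psi k)| < e); move: h1 h2 h3; generalize (u (psi k)) (1 / k.+1%:R : R) => a b h1 h2 h3.
rewrite ltr_norml; apply/andP; split.
  rewrite ltrNl opprB ltrBlDl; apply: (lt_trans h2); by rewrite ltrD2l.
by move: h1; rewrite ltrBlDl ltrBlDr.
Unshelve. all: end_near.
Qed.


Lemma Int_bnd {R : realType} {dsp : measure_display} {X : measurableType dsp}
  (P : probability X R) (f : X -> R) (M : R) :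
  measurable_fun setT f -> (forall y, `|f y| <= M) -> Int P f.
Proof. by move=> mf hf; apply: (Int_le (g := fun _ => M)) => //; exact: Int_cst. Qed.

Section FindY.
Context {R : realType} {dsp : measure_display} {X : measurableType dsp}
  (d : X -> X -> R) (Hm : is_metric d) (Hb : borel_of_metric d).
Variable p : R.
Hypothesis p1 : 1 <= p.
Variables (nu : nat -> probability X R) (mu : probability X R).
Hypothesis hcvg : tau_w_cvg d (p - 1) nu mu.
Hypothesis hmu : in_P d (p - 1) mu.
Hypothesis hnu : forall n, in_P d (p - 1) (nu n).
Variables (z : nat -> X) (x : X) (B : R).
Hypothesis hz : forall n, M_p d p (nu n) (z n).
Hypothesis hB : forall n, d (z n) x <= B.

Let q0 : 0 <= p - 1. Proof. by rewrite subr_ge0. Qed.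
Let p0 : 0 < p. Proof. by apply: lt_le_trans p1. Qed.
Let B0 : 0 <= B. Proof. exact: le_trans (d_ge0 Hm _ _) (hB 0). Qed.

Definition mS N y := [set d (z n) y | n in [set n | (N <= n)%N]].
Definition m N y := inf (mS N y).

Lemma mS_ne N y : mS N y !=set0.
Proof. by exists (d (z N) y); exists N => /=. Qed.

Lemma mS_lb N y : has_lbound (mS N y).
Proof. by exists 0 => _ [n _ <-]; exact: d_ge0. Qed.

Lemma m_le N y n : (N <= n)%N -> m N y <= d (z n) y.
Proof. by move=> hn; apply: ge_inf; [exact: mS_lb | exists n]. Qed.

Lemma m_ge N y c : (forall n, (N <= n)%N -> c <= d (z n) y) -> c <= m N y.
Proof. by move=> h; apply: lb_le_inf; [exact: mS_ne | move=> _ [n hn <-]; exact: h]. Qed.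

Lemma m_ge0 N y : 0 <= m N y.
Proof. by apply: m_ge => n _; exact: d_ge0. Qed.

Lemma m_lowB N y : d x y - B <= m N y.
Proof.
apply: m_ge => n _; have := d_tri Hm x (z n) y; rewrite (d_sym Hm x (z n)).
have := hB n; lra.
Qed.

Lemma m_mono N N' y : (N <= N')%N -> m N y <= m N' y.
Proof. by move=> h; apply: m_ge => n hn; apply: m_le; exact: leq_trans hn. Qed.

Lemma m_lip N y y' : `|m N y - m N y'| <= 1 * d y y'.
Proof.
rewrite mul1r ler_norml; apply/andP; split.
- have : m N y' - d y y' <= m N y.
    apply: m_ge => n hn; have := m_le y' hn; have := d_tri Hm (z n) y y'; lra.
  lra.
- have : m N y - d y y' <= m N y'.
    apply: m_ge => n hn; have := m_le y hn; have := d_tri Hm (z n) y' y.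
    rewrite (d_sym Hm y' y); lra.
  lra.
Qed.

Lemma m_dcont N : dcontinuous d (m N).
Proof. by apply: (dcont_lip Hm (L := 1)) => // y y'; exact: m_lip. Qed.

Definition G N y := Num.min (m N y `^ p - d x y `^ p) 1.
Definition Phi N y := Num.min ((Num.max (m N y - d x y) 0) `^ p) 1.
Definition Psi N y := Num.max 0 (d x y `^ p - m N y `^ p).
Definition chi N y := Num.min 1 (N%:R * Phi N y).

Lemma m_pow_diff N y : d x y `^ p - m N y `^ p <= p * B * d x y `^ (p - 1).
Proof.
have [h|h] := leP (d x y) (m N y).
  have : d x y `^ p <= m N y `^ p by apply: pow_mono => //; [exact: ltW | exact: d_ge0].
  have : 0 <= p * B * d x y `^ (p - 1) by rewrite !mulr_ge0 ?powR_ge0 // ltW.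
  lra.
have := pow_diff p1 (m_ge0 N y) (ltW h).
have : p * d x y `^ (p - 1) * (d x y - m N y) <= p * B * d x y `^ (p - 1).
  by rewrite mulrAC ler_wpM2r ?powR_ge0 // ler_wpM2l ?(ltW p0) //; have := m_lowB N y; lra.
lra.
Qed.

Lemma G_bound N y : `|G N y| <= 1 + p * B * d x y `^ (p - 1).
Proof.
have hp := m_pow_diff N y.
have h0 : 0 <= p * B * d x y `^ (p - 1) by rewrite !mulr_ge0 ?powR_ge0 // ltW.
rewrite /G ler_norml; apply/andP; split.
  rewrite le_min; apply/andP; split; lra.
rewrite ge_min; apply/orP; right; lra.
Qed.

Lemma G_dcont N : dcontinuous d (G N).
Proof.
apply: dcont_min; last exact: dcont_cst.
apply: dcontB; last by apply: (dcont_dpow Hm); exact: ltW.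
apply: dcont_pow; [exact: ltW | exact: m_ge0 | exact: m_dcont].
Qed.

Lemma s1 N : RI mu (G N) <= 0.
Proof.
have C'0 : 0 <= p * B by rewrite mulr_ge0 // ltW.
have [InG ImG cvG] := @lemA _ _ _ d Hm Hb (p - 1) nu mu q0 hcvg hmu x (G N) 1 (p * B)
  ler01 C'0 (G_dcont N) (G_bound N).
rewrite leNgt; apply/negP => pos.
move/cvgrPdist_lt: cvG => /(_ _ pos) E.
have [n [hn [ig e1]]] : exists n, (N <= n)%N /\ Int (nu n) (G N) /\
    `|RI mu (G N) - RI (nu n) (G N)| < RI mu (G N).
  apply: eventually_ex; near=> n; split; first by near: n; exact: nbhs_infty_ge.
  by split; near: n.
have W0 := Mp_RI Hm Hb p1 (hnu n) (hz n) x.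
have iW := W_int Hm Hb p1 (hnu n) (z n) x.
have : RI (nu n) (G N) <= RI (nu n) (fun y => d (z n) y `^ p - d x y `^ p).
  apply: RI_le => // y; rewrite /G ge_min; apply/orP; left.
  rewrite lerD2r; apply: pow_mono; [exact: ltW | exact: m_ge0 | exact: m_le].
move: e1; rewrite ltr_norml => /andP[a1 a2]; lra.
Unshelve. all: end_near.
Qed.

Lemma s2 N y : Phi N y - Psi N y <= G N y.
Proof.
rewrite /Phi /Psi /G.
have dy0 := d_ge0 Hm x y; have m0 := m_ge0 N y.
have [h|h] := leP (d x y) (m N y).
  have pm : d x y `^ p <= m N y `^ p by apply: pow_mono => //; exact: ltW.
  rewrite (max_l (_ : 0 <= m N y - d x y)); last lra.
  rewrite (max_l (_ : d x y `^ p - m N y `^ p <= 0)); last lra.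
  have sa := pow_superadd p1 (_ : 0 <= m N y - d x y) dy0.
  rewrite subrK in sa; have {}sa := sa ltac:(lra).
  rewrite subr0 le_min; apply/andP; split; last by rewrite ge_min lexx orbT.
  rewrite ge_min; apply/orP; left; lra.
rewrite (max_r (_ : m N y - d x y <= 0)); last lra.
rewrite powR0 ?gt_eqF // (min_l ler01).
have pm : m N y `^ p <= d x y `^ p by apply: pow_mono => //; [exact: ltW | exact: ltW].
rewrite (max_r (_ : 0 <= d x y `^ p - m N y `^ p)); last lra.
rewrite (min_l (_ : m N y `^ p - d x y `^ p <= 1)); lra.
Qed.

Lemma Psi_bound N y : `|Psi N y| <= p * B * d x y `^ (p - 1).
Proof.
have hp := m_pow_diff N y.
have h0 : 0 <= p * B * d x y `^ (p - 1) by rewrite !mulr_ge0 ?powR_ge0 // ltW.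
rewrite /Psi ger0_norm ?le_max ?lexx // ge_max; apply/andP; split => //.
Qed.

Lemma Phi_mono N N' y : (N <= N')%N -> Phi N y <= Phi N' y.
Proof.
move=> hN; rewrite /Phi le_min ge_min ge_min lexx !orbT andbT; apply/orP; left.
apply: pow_mono; [exact: ltW | by rewrite le_max lexx orbT |].
rewrite ge_max le_max le_max lexx orbT andbT; apply/orP; left.
have := m_mono y hN; lra.
Qed.

Lemma Phi_bound N y : `|Phi N y| <= 1.
Proof.
have h0 : 0 <= Phi N y by rewrite le_min powR_ge0 ler01.
by rewrite ger0_norm // /Phi ge_min lexx orbT.
Qed.

Lemma Phi_dcont N : dcontinuous d (Phi N).
Proof.
apply: dcont_min; last exact: dcont_cst.
apply: dcont_pow; [exact: ltW | by move=> y; rewrite le_max lexx orbT |].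
apply: dcont_max; last exact: dcont_cst.
apply: dcontB; [exact: m_dcont | exact: dcont_d].
Qed.

Lemma Psi_dcont N : dcontinuous d (Psi N).
Proof.
apply: dcont_max; first exact: dcont_cst.
apply: dcontB; first by apply: (dcont_dpow Hm); exact: ltW.
apply: dcont_pow; [exact: ltW | exact: m_ge0 | exact: m_dcont].
Qed.

Lemma chi_dcont N : dcontinuous d (chi N).
Proof.
apply: dcont_min; first exact: dcont_cst.
apply: dcontZ; exact: Phi_dcont.
Qed.

Section Contra.
Hypothesis H' : forall y, exists N, d x y < m N y.

Lemma Psi_ev0 y : \forall N \near \oo, Psi N y = 0.
Proof.
have [N1 h1] := H' y.
near=> N.
have hN : (N1 <= N)%N by near: N; exact: nbhs_infty_ge.
have := m_mono y hN => h2.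
have pm : d x y `^ p <= m N y `^ p.
  apply: pow_mono; [exact: ltW | exact: d_ge0 | lra].
by rewrite /Psi max_l //; lra.
Unshelve. all: end_near.
Qed.

Lemma s3 : RI mu (Psi N) @[N --> \oo] --> 0.
Proof.
have -> : (0 : R) = RI mu (fun _ => 0) by rewrite RI_cst.
apply: (@dct _ _ _ mu _ _ (fun y => p * B * d x y `^ (p - 1))).
- by move=> N; apply: (dcont_meas Hb); exact: Psi_dcont.
- exact: measurable_cst.
- by apply: IntZ; apply: inP_all.
- by move=> N y; exact: Psi_bound.
- by move=> y; apply: cvg_near_cst; exact: Psi_ev0.
Qed.

Lemma s5 N0 : RI mu (Phi N0) <= 0.
Proof.
rewrite leNgt; apply/negP => pos.
move/cvgrPdist_lt: s3 => /(_ _ pos) E.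
have [N [hN e1]] : exists N, (N0 <= N)%N /\ `|0 - RI mu (Psi N)| < RI mu (Phi N0).
  apply: eventually_ex; near=> N; split; first by near: N; exact: nbhs_infty_ge.
  by near: N.
have IPhi N' : Int mu (Phi N') by apply: (Int_bnd _ (M := 1));
  [apply: (dcont_meas Hb); exact: Phi_dcont | exact: Phi_bound].
have IPsi : Int mu (Psi N).
  apply: (Int_le (g := fun y => p * B * d x y `^ (p - 1))).
  - by apply: (dcont_meas Hb); exact: Psi_dcont.
  - exact: Psi_bound.
  - by apply: IntZ; apply: inP_all.
have IG : Int mu (G N).
  apply: (Int_le (g := fun y => 1 + p * B * d x y `^ (p - 1))).
  - by apply: (dcont_meas Hb); exact: G_dcont.
  - exact: G_bound.
  - by apply: IntD; [exact: Int_cst | apply: IntZ; apply: inP_all].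
have a1 : RI mu (Phi N0) <= RI mu (Phi N) by apply: RI_le => // y; exact: Phi_mono.
have a2 : RI mu (Phi N) <= RI mu (fun y => G N y + Psi N y).
  by apply: RI_le => //; [exact: IntD | move=> y /=; rewrite -lerBlDr; exact: s2].
rewrite RID // in a2.
have a3 := s1 N.
move: e1; rewrite sub0r normrN ger0_norm; last first.
  by apply: RI_ge0 => y; rewrite /Psi le_max lexx.
move: a1 a2 a3; generalize (RI mu (Phi N0)) (RI mu (Phi N)) (RI mu (G N)) (RI mu (Psi N)).
move=> A1 B1 C1 D1 h1 h2 h3 h4; lra.
Unshelve. all: end_near.
Qed.

Lemma chi_ev1 y : \forall N \near \oo, chi N y = 1.
Proof.
have [N1 h1] := H' y.
have del0 : 0 < Phi N1 y.
  rewrite /Phi lt_min ltr01 andbT powR_gt0 // lt_max; apply/orP; left; lra.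
near=> N.
have hN : (N1 <= N)%N by near: N; exact: nbhs_infty_ge.
have hN2 : (Phi N1 y)^-1 <= N%:R by near: N; exact: nbhs_infty_ger.
have a1 := Phi_mono y hN.
rewrite /chi min_l //.
have : 1 <= N%:R * Phi N1 y by rewrite -ler_pdivrMr // mul1r.
move=> h; apply: le_trans h _; rewrite ler_wpM2l //.
Unshelve. all: end_near.
Qed.

Lemma contra_final : False.
Proof.
have C : RI mu (chi N) @[N --> \oo] --> RI mu (fun _ => 1 : R).
  apply: (@dct _ _ _ mu _ _ (fun _ => 1)).
  - by move=> N; apply: (dcont_meas Hb); exact: chi_dcont.
  - exact: measurable_cst.
  - exact: Int_cst.
  - move=> N y; have h0 : 0 <= chi N y.
      rewrite /chi le_min ler01 mulr_ge0 //.
      by rewrite le_min powR_ge0 ler01.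
    by rewrite ger0_norm // /chi ge_min lexx.
  - by move=> y; apply: cvg_near_cst; exact: chi_ev1.
rewrite RI_cst in C.
have e0 : 0 < 1 / 2 :> R by rewrite divr_gt0.
move/cvgrPdist_lt: C => /(_ _ e0) /eventually_ex [N hN].
have IPhi : Int mu (Phi N) by apply: (Int_bnd _ (M := 1));
  [apply: (dcont_meas Hb); exact: Phi_dcont | exact: Phi_bound].
have Ichi : Int mu (chi N).
  apply: (Int_bnd _ (M := 1)); first by apply: (dcont_meas Hb); exact: chi_dcont.
  move=> y; have h0 : 0 <= chi N y.
    rewrite /chi le_min ler01 mulr_ge0 //.
    by rewrite le_min powR_ge0 ler01.
  by rewrite ger0_norm // /chi ge_min lexx.
have a1 : RI mu (chi N) <= RI mu (fun y => N%:R * Phi N y).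
  by apply: RI_le => //; [exact: IntZ | move=> y; rewrite /chi ge_min lexx orbT].
rewrite RIZ // in a1.
have a2 : N%:R * RI mu (Phi N) <= 0 by rewrite mulr_ge0_le0 // s5.
move: hN; rewrite ltr_norml => /andP[b1 b2].
move: a1 a2 b1 b2; generalize (RI mu (chi N)) (RI mu (Phi N)) => A1 B1 h1 h2 h3 h4.
have : 0 <= N%:R * B1 by lra.
lra.
Qed.

End Contra.

Lemma find_y : exists y, forall N e, 0 < e ->
  exists n, (N <= n)%N /\ d (z n) y < d x y + e.
Proof.
apply: contrapT => Hn; apply: contra_final => y.
move/forallNP: Hn => /(_ y) /existsNP [N] /existsNP [e] /not_implyP [e0].
move/forallNP => Hne.
exists N; apply: (@lt_le_trans _ _ (d x y + e)); first lra.
apply: m_ge => n hn; rewrite leNgt; apply/negP => h; apply: (Hne n); split => //.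
Qed.

End FindY.


Lemma frac_lt {R : realType} (a b : R) : 0 <= a -> 0 < b -> a * (b / (a + 1)) < b.
Proof.
move=> ha hb; have h1 : 0 < a + 1 by lra.
rewrite mulrA ltr_pdivrMr //; nra.
Qed.

Lemma absB_lt_le {R : realType} (a b c : R) : `|a - b| < c -> b <= a + c.
Proof. by rewrite ltr_norml => /andP[h1 h2]; lra. Qed.

Lemma absB_lt_ge {R : realType} (a b c : R) : `|a - b| < c -> a - c < b.
Proof. by rewrite ltr_norml => /andP[h1 h2]; lra. Qed.

Lemma fin_contra {R : realType} (A B C D e : R) : B <= 0 -> A = B + C -> C <= D ->
  D < e / 2 -> e - e / 2 < A -> False.
Proof. move=> h1 h2 h3 h4 h5; lra. Qed.

Section Memb.
Context {R : realType} {dsp : measure_display} {X : measurableType dsp}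
  (d : X -> X -> R) (Hm : is_metric d) (Hb : borel_of_metric d).
Variable p : R.
Hypothesis p1 : 1 <= p.
Variables (nu : nat -> probability X R) (mu : probability X R).
Hypothesis hcvg : tau_w_cvg d (p - 1) nu mu.
Hypothesis hmu : in_P d (p - 1) mu.
Hypothesis hnu : forall n, in_P d (p - 1) (nu n).
Variables (z : nat -> X) (x : X).
Hypothesis hz : forall n, M_p d p (nu n) (z n).
Hypothesis hzx : (fun n => d (z n) x) @ \oo --> (0 : R).

Let q0 : 0 <= p - 1. Proof. by rewrite subr_ge0. Qed.
Let p0 : 0 < p. Proof. by apply: lt_le_trans p1. Qed.

Lemma memb : M_p d p mu x.
Proof.
move=> x'; rewrite /W_p (int_EFin (W_int Hm Hb p1 hmu x x')) lee_fin.
pose w y := d x y `^ p - d x' y `^ p.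
pose L := d x x'.
pose K := p * 2 `^ (p - 1).
have K0 : 0 <= K by rewrite mulr_ge0 ?powR_ge0 // ltW.
have L0 : 0 <= L by exact: d_ge0.
have wb y : `|w y| <= p * L * 2 `^ (p - 1) * L `^ (p - 1)
    + p * L * 2 `^ (p - 1) * d x' y `^ (p - 1) by exact: dpow_growth.
have [Inw Imw cvw] := @lemA _ _ _ d Hm Hb (p - 1) nu mu q0 hcvg hmu x' w _ _
  (mulr_ge0 (mulr_ge0 (mulr_ge0 (ltW p0) L0) (powR_ge0 _ _)) (powR_ge0 _ _))
  (mulr_ge0 (mulr_ge0 (ltW p0) L0) (powR_ge0 _ _))
  (dcontB (dcont_dpow Hm x (ltW p0)) (dcont_dpow Hm x' (ltW p0))) wb.
have [Inh Imh cvh] := @h_cvg _ _ _ d Hm Hb (p - 1) nu mu q0 hcvg hmu x.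
set I := RI mu (fun y => d x y `^ (p - 1)) in cvh.
rewrite leNgt; apply/negP => pos.
set eta := RI mu w in pos cvw.
have eta2 : 0 < eta / 2 by rewrite divr_gt0.
have e1 : 0 < 1 :> R by [].
pose del := Num.min 1 (eta / 2 / (K * (I + 2) + 1)).
have I0 : 0 <= I by apply: RI_ge0 => y; exact: powR_ge0.
have KI : 0 < K * (I + 2) + 1 by rewrite ltr_wpDl // mulr_ge0 //; lra.
have del0 : 0 < del by rewrite lt_min ltr01 divr_gt0.
move/cvgrPdist_lt: cvw => /(_ _ eta2) E1.
move/cvgrPdist_lt: cvh => /(_ _ e1) E2.
move/cvgrPdist_lt: hzx => /(_ _ del0) E3.
have [n [[i1 a1] [a2 a3]]] : exists n, (Int (nu n) w /\
    `|eta - RI (nu n) w| < eta / 2) /\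
    (`|I - RI (nu n) (fun y => d x y `^ (p - 1))| < 1 /\ `|0 - d (z n) x| < del).
  apply: eventually_ex; near=> n; split; split; near: n => //.
set dl := d (z n) x in a3.
have dl0 : 0 <= dl by exact: d_ge0.
have hdl : dl < del by move: a3; rewrite sub0r normrN ger0_norm.
have dl1 : dl <= 1 by apply: ltW; apply: lt_le_trans hdl _; rewrite ge_min lexx.
have dlq : dl `^ (p - 1) <= 1.
  by apply: le_trans (pow_mono q0 dl0 dl1) _; rewrite powR1.
have ihx : Int (nu n) (fun y => d x y `^ (p - 1)) by apply: inP_all.
have iA := W_int Hm Hb p1 (hnu n) (z n) x'.
have iB := W_int Hm Hb p1 (hnu n) x (z n).
have W0 := Mp_RI Hm Hb p1 (hnu n) (hz n) x'.
have split_w : RI (nu n) w = RI (nu n) (fun y => d (z n) y `^ p - d x' y `^ p)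
    + RI (nu n) (fun y => d x y `^ p - d (z n) y `^ p).
  rewrite -RID //; apply: eq_Rintegral => y _; rewrite /w; ring.
have bnd : RI (nu n) (fun y => d x y `^ p - d (z n) y `^ p) <=
    RI (nu n) (fun y => p * dl * 2 `^ (p - 1) * dl `^ (p - 1)
      + p * dl * 2 `^ (p - 1) * d x y `^ (p - 1)).
  apply: RI_le => //; first by apply: IntD; [exact: Int_cst | exact: IntZ].
  move=> y; have := dpow_growth Hm p1 (z n) x y.
  rewrite -/dl => h; apply: le_trans h; rewrite -normrN opprB; exact: ler_norm.
have eq1 : RI (nu n) (fun y => p * dl * 2 `^ (p - 1) * dl `^ (p - 1)
      + p * dl * 2 `^ (p - 1) * d x y `^ (p - 1)) = p * dl * 2 `^ (p - 1) * dl `^ (p - 1)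
      + p * dl * 2 `^ (p - 1) * RI (nu n) (fun y => d x y `^ (p - 1)).
  rewrite RID; [by rewrite RI_cst RIZ | exact: Int_cst | exact: IntZ].
rewrite eq1 in bnd.
set J := RI (nu n) (fun y => d x y `^ (p - 1)) in a2 bnd.
have J2 : J <= I + 1 by exact: (absB_lt_le a2).
have J0 : 0 <= J by apply: RI_ge0 => y; exact: powR_ge0.
have b1 : RI (nu n) (fun y => d x y `^ p - d (z n) y `^ p) <= K * dl * (I + 2).
  apply: le_trans bnd _; rewrite /K.
  have -> : p * dl * 2 `^ (p - 1) * dl `^ (p - 1) + p * dl * 2 `^ (p - 1) * J
    = (p * 2 `^ (p - 1)) * dl * (dl `^ (p - 1) + J) by ring.
  apply: ler_wpM2l; first by rewrite mulr_ge0.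
  have -> : I + 2 = 1 + (I + 1) by ring.
  exact: lerD.
have b2 : K * dl * (I + 2) < eta / 2.
  have h1 : dl <= eta / 2 / (K * (I + 2) + 1).
    by apply: ltW; apply: lt_le_trans hdl _; rewrite ge_min lexx orbT.
  have h2 : K * (I + 2) * (eta / 2 / (K * (I + 2) + 1)) < eta / 2.
    apply: frac_lt => //; rewrite mulr_ge0 //; exact: addr_ge0.
  have h3 : K * (I + 2) * dl <= K * (I + 2) * (eta / 2 / (K * (I + 2) + 1)).
    by apply: ler_wpM2l => //; rewrite mulr_ge0 //; exact: addr_ge0.
  by rewrite mulrAC; apply: le_lt_trans h3 h2.
exact: (fin_contra W0 split_w b1 b2 (absB_lt_ge a1)).
Unshelve. all: end_near.
Qed.
End Memb.


Section Core.
Context {R : realType} {dsp : measure_display} {X : measurableType dsp}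
  (d : X -> X -> R) (Hm : is_metric d) (Hb : borel_of_metric d).
Variable p : R.
Hypothesis p1 : 1 <= p.
Variable mu : probability X R.
Hypothesis hmu : in_P d (p - 1) mu.
Variable c : (nat -> X) -> X -> Prop.
Hypothesis hc : weak_convergence d c.

Lemma core (nu : nat -> probability X R) (z : nat -> X) (e : R) :
  tau_w_cvg d (p - 1) nu mu -> (forall n, in_P d (p - 1) (nu n)) ->
  (forall n, M_p d p (nu n) (z n)) ->
  (forall n x, M_p d p mu x -> e <= d (z n) x) -> 0 < e -> False.
Proof.
move=> hcvg hnu hz bad e0.
case: hc => [[_ hsub] [W1 [W2 W3]]].
pose o := z 0%N.
have [D0 [N _ HN]] := bounded_min Hm Hb p1 hcvg hmu hnu o hz.
pose phi1 n := (n + N)%N.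
have i1 : incr phi1 by exact: incr_shift.
pose nu1 := nu \o phi1; pose z1 := z \o phi1.
have hcvg1 : tau_w_cvg d (p - 1) nu1 mu by exact: tau_sub.
have hnu1 n : in_P d (p - 1) (nu1 n) by exact: hnu.
have hz1 n : M_p d p (nu1 n) (z1 n) by exact: hz.
have bz1 n : d (z1 n) o <= D0.
  rewrite d_sym //; apply: ltW; apply: HN => /=; exact: leq_addl.
have [phi2 [x [i2 cx]]] := W1 z1 (ex_intro _ o (ex_intro _ D0 bz1)).
pose nu2 := nu1 \o phi2; pose z2 := z1 \o phi2.
have hcvg2 : tau_w_cvg d (p - 1) nu2 mu by exact: tau_sub.
have hnu2 n : in_P d (p - 1) (nu2 n) by exact: hnu1.
have hz2 n : M_p d p (nu2 n) (z2 n) by exact: hz1.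
have bz2 n : d (z2 n) x <= D0 + d o x.
  by apply: le_trans (d_tri Hm _ o _) _; apply: lerD => //; exact: bz1.
have [y hy] := find_y Hm Hb p1 hcvg2 hmu hnu2 hz2 bz2.
have low := low_W2 (W2 _ _ cx y).
have [psi [i3 cvy]] := extract (fun N e' e'0 => hy N e' e'0) low.
have cx3 : c (z2 \o psi) x by exact: hsub.
have cv0 := W3 _ _ cx3 y cvy.
have Mx : M_p d p mu x.
  apply: (@memb _ _ _ d Hm Hb p p1 (nu2 \o psi) mu (tau_sub i3 hcvg2) hmu
    (fun n => hnu2 (psi n)) (z2 \o psi) x (fun n => hz2 (psi n)) cv0).
move/cvgrPdist_lt: cv0 => /(_ _ e0) /eventually_ex [k hk].
have := bad (phi1 (phi2 (psi k))) x Mx.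
move: hk; rewrite sub0r normrN ger0_norm; last exact: d_ge0.
rewrite /comp /z2 /z1 /comp => h1 h2.
by have := lt_le_trans h1 h2; rewrite ltxx.
Qed.

End Core.

Unset Implicit Arguments.
Theorem corollary3p11 (R : realType) (dsp : measure_display)
  (X : measurableType dsp) (d : X -> X -> R)
  (Hmetric : is_metric d) (Hborel : borel_of_metric d)
  (Hsep : dseparable d) (Hweak : admits_weak_convergence d)
  (p : R) (hp : 1 <= p)
  (mu_ : nat -> probability X R) (mu : probability X R)
  (Hmu_ : forall n, in_P d (p - 1) (mu_ n)) (Hmu : in_P d (p - 1) mu)
  (Hcvg : tau_w_cvg d (p - 1) mu_ mu) :
  forall e : R, 0 < e ->
    \forall n \near \oo, forall xn : X, M_p d p (mu_ n) xn ->
      exists2 x : X, M_p d p mu x & d xn x < e.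
Proof.
move=> e e0.
have [c hc] := Hweak.
apply: contrapT => Hn.
have H1 : forall N, exists q : nat * X, (N <= q.1)%N /\ M_p d p (mu_ q.1) q.2 /\
    (forall x, M_p d p mu x -> e <= d q.2 x).
  move=> N; apply: contrapT => H; apply: Hn; exists N => // n /= hn xn hxn.
  apply: contrapT => hne; apply: H; exists (n, xn); split => //; split => // x hx.
  by rewrite leNgt; apply/negP => hlt; apply: hne; exists x.
pose pick N := sval (cid (H1 N)).
have Hpick N : (N <= (pick N).1)%N /\ M_p d p (mu_ (pick N).1) (pick N).2 /\
    (forall x, M_p d p mu x -> e <= d (pick N).2 x) by exact: (svalP (cid (H1 N))).
pose ks := fix f j := match j with 0 => pick 0%N | j'.+1 => pick (f j').1.+1 end.
have Hks j : M_p d p (mu_ (ks j).1) (ks j).2 /\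
    (forall x, M_p d p mu x -> e <= d (ks j).2 x).
  by case: j => [|j] /=; [case: (Hpick 0%N) => _ [] | case: (Hpick (ks j).1.+1) => _ []].
have inc : incr (fun j => (ks j).1).
  by move=> j /=; case: (Hpick (ks j).1.+1).
apply: (@core _ _ _ d Hmetric Hborel p hp mu Hmu c hc (fun j => mu_ (ks j).1)
  (fun j => (ks j).2) e).
- exact: (tau_sub inc Hcvg).
- by move=> j; exact: Hmu_.
- by move=> j; case: (Hks j).
- by move=> j x hx; case: (Hks j) => _; apply.
- exact: e0.
Qed.
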